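(* Let $X$ be a Tychonoff space and $A\subseteq X$ a clopen subset. Then (a) $\operatorname{Homeo}_{cpt}(A)$ naturally embeds (by extending homeomorphisms by the identity on $X\setminus A$) as a closed topological subgroup of $\operatorname{Homeo}_{cpt}(X)$; and (b) if $X$ has CSHP, then so does $A$.
   Context: For a Tychonoff space $Y$, $\operatorname{Homeo}_{cpt}(Y)$ is the group of homeomorphisms of $Y$ with compact support $\operatorname{cl}_Y\{y\mid h(y)\neq y\}$; each extends to a homeomorphism of $\beta Y$ that is the identity on $\beta Y\setminus Y$, and $\operatorname{Homeo}_{cpt}(Y)$ is given the compact-open topology induced from $\beta Y$. For compact $K\subseteq Y$, $\operatorname{Homeo}_K(Y)$ is the subgroup of homeomorphisms fixing every point outside $K$. $Y$ has CSHP (Compactly Supported Homeomorphism Property) if the colimit space topology on $\bigcup_{K\in\mathscr K(Y)}\operatorname{Homeo}_K(Y)=\operatorname{Homeo}_{cpt}(Y)$, namely $\{U\mid U\cap\operatorname{Homeo}_K(Y)\text{ open in }\operatorname{Homeo}_K(Y)\ \forall K\}$ ($\mathscr K(Y)$ the compact subsets of $Y$), coincides with the topology of $\operatorname{Homeo}_{cpt}(Y)$. *)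

(* Defs.v *)
From HB Require Import structures.
From mathcomp Require Import all_boot all_algebra.
From mathcomp Require Import all_classical all_reals all_analysis.

Set Implicit Arguments.
Unset Strict Implicit.
Unset Printing Implicit Defensive.

Local Open Scope classical_set_scope.

Definition tychonoff_space (T : topologicalType) : Prop :=
  completely_regular_space T /\ hausdorff_space T.

(** Such a pair exists for every Tychonoff [Y] and is unique up to a
    homeomorphism commuting with the embeddings. *)
Definition is_stone_cech (Y bY : topologicalType) (e : Y -> bY) : Prop :=
  [/\ compact [set: bY], hausdorff_space bY, continuous e & injective e] /\
  [/\
      (forall U : set Y, open U -> exists V : set bY, open V /\ U = e @^-1` V),
      closure (range e) = [set: bY] &
      forall (K : topologicalType) (f : Y -> K),
        compact [set: K] -> hausdorff_space K -> continuous f ->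
        exists g : bY -> K, continuous g /\ (forall y, g (e y) = f y)].

Definition is_homeo (Y : topologicalType) (h : Y -> Y) : Prop :=
  continuous h /\
  exists g : Y -> Y, [/\ continuous g, cancel h g & cancel g h].

Definition support (Y : topologicalType) (h : Y -> Y) : set Y :=
  closure [set y | h y <> y].

Definition Homeo_cpt (Y : topologicalType) : set (Y -> Y) :=
  [set h | is_homeo h /\ compact (support h)].
Arguments Homeo_cpt Y : clear implicits.

Definition Homeo_K (Y : topologicalType) (K : set Y) : set (Y -> Y) :=
  [set h | Homeo_cpt Y h /\ forall y, ~ K y -> h y = y].

(** The extension of [h : Y -> Y] to [bY] which is the identity on
    [bY \ e(Y)] (well defined since [e] is injective). *)
Definition bext (Y bY : topologicalType) (e : Y -> bY) (h : Y -> Y)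
  (z : bY) : bY :=
  match pselect (exists y, e y = z) with
  | left P => e (h (projT1 (cid P)))
  | right _ => z
  end.

(** Open subsets of Homeo_cpt(Y) for the compact-open topology induced from
    bY (the initial topology of [bext e] into the compact-open topology on
    maps [bY -> bY]). *)
Definition HC_open (Y bY : topologicalType) (e : Y -> bY)
  (U : set (Y -> Y)) : Prop :=
  exists V : set {compact-open, bY -> bY},
    open V /\ U = Homeo_cpt Y `&` (bext e) @^-1` V.

Definition HC_subspace_open (Y bY : topologicalType) (e : Y -> bY)
  (S U : set (Y -> Y)) : Prop :=
  exists W, HC_open e W /\ U = S `&` W.

(** Open subsets for the colimit topology over the Homeo_K(Y), K compact. *)
Definition HC_colim_open (Y bY : topologicalType) (e : Y -> bY)
  (U : set (Y -> Y)) : Prop :=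
  U `<=` Homeo_cpt Y /\
  forall K : set Y, compact K -> HC_subspace_open e (Homeo_K K) (U `&` Homeo_K K).

(** CSHP (relative to the Stone-Cech compactification [e : Y -> bY]):
    the colimit topology coincides with the topology of Homeo_cpt(Y). *)
Definition CSHP (Y bY : topologicalType) (e : Y -> bY) : Prop :=
  forall U : set (Y -> Y), HC_colim_open e U <-> HC_open e U.

Definition ext_id (X : topologicalType) (A : set X) (h : A -> A) (x : X) : X :=
  match pselect (A x) with
  | left Ax => set_val (h (exist _ x (mem_set Ax)))
  | right _ => x
  end.

(* Main.v *)
Require Import Defs.
From HB Require Import structures.
From mathcomp Require Import all_boot all_algebra.
From mathcomp Require Import all_classical all_reals all_analysis.
Local Open Scope classical_set_scope.
Set Implicit Arguments.
Unset Strict Implicit.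
Unset Printing Implicit Defensive.
Section SC.
Context (Y bY : topologicalType) (e : Y -> bY) (sc : is_stone_cech e).

Lemma sc_cpt : compact [set: bY]. Proof. by case: sc => -[]. Qed.
Lemma sc_haus : hausdorff_space bY. Proof. by case: sc => -[]. Qed.
Lemma sc_cont : continuous e. Proof. by case: sc => -[]. Qed.
Lemma sc_inj : injective e. Proof. by case: sc => -[]. Qed.
Lemma sc_dense : closure (range e) = [set: bY]. Proof. by case: sc => _ []. Qed.
Lemma sc_ext (K : topologicalType) (f : Y -> K) :
  compact [set: K] -> hausdorff_space K -> continuous f ->
  exists g : bY -> K, continuous g /\ (forall y, g (e y) = f y).
Proof. by case: sc => _ [_ _]; apply. Qed.

Lemma sc_eq (Z : topologicalType) (f g : bY -> Z) :
  hausdorff_space Z -> continuous f -> continuous g ->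
  (forall y, f (e y) = g (e y)) -> f = g.
Proof.
move=> hZ cf cg fg; apply: funext => z; apply: contrapT => /eqP neq.
move: hZ; rewrite open_hausdorff => /(_ _ _ neq) [[P Q]] /= [Pf Qg] [oP oQ /eqP PQ].
have : closure (range e) z by rewrite sc_dense.
move=> /(_ (f @^-1` P `&` g @^-1` Q)) [].
  apply: filterI; apply: open_nbhs_nbhs; split.
  - by apply: (continuousP f).1.
  - by rewrite /= -inE.
  - by apply: (continuousP g).1.
  - by rewrite /= -inE.
move=> _ [[y _ <-] [/= Py Qy]].
have : (P `&` Q) (f (e y)) by split => //; rewrite fg.
by rewrite PQ.
Qed.

Lemma sc_empty (z : bY) : exists y : Y, True.
Proof.
have : closure (range e) z by rewrite sc_dense.
by move=> /(_ setT filterT) [_ [[y _ _] _]]; exists y.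
Qed.

End SC.
Section Sub.
Context (X : topologicalType) (A : set X).

Lemma val_cont : continuous (@set_val X A).
Proof. exact: initial_continuous. Qed.

Lemma set_val_inj : injective (@set_val X A).
Proof. by move=> [x px] [y py] /= xy; apply: eq_sig_hprop. Qed.

Lemma ext_val (h : A -> A) (a : A) : ext_id h (set_val a) = set_val (h a).
Proof.
rewrite /ext_id; case: pselect => [Aa|]; last by case; apply: set_valP.
by congr (set_val (h _)); apply: set_val_inj.
Qed.

Lemma ext_out (h : A -> A) x : ~ A x -> ext_id h x = x.
Proof. by rewrite /ext_id; case: pselect. Qed.

Lemma ext_in (h : A -> A) x (Ax : A x) : ext_id h x = set_val (h (exist _ x (mem_set Ax))).
Proof. by rewrite -ext_val. Qed.

Definition retr (a0 : A) (x : X) : A :=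
  match pselect (A x) with
  | left Ax => exist _ x (mem_set Ax)
  | right _ => a0
  end.

Lemma retr_val a0 (a : A) : retr a0 (set_val a) = a.
Proof.
rewrite /retr; case: pselect => [Aa|]; last by case; apply: set_valP.
by apply: set_val_inj.
Qed.

Lemma val_retr a0 x : A x -> set_val (retr a0 x) = x.
Proof. by rewrite /retr; case: pselect. Qed.

Lemma retr_out a0 x : ~ A x -> retr a0 x = a0.
Proof. by rewrite /retr; case: pselect. Qed.

Context (oA : open A) (cA : closed A).

Lemma retr_cont a0 : continuous (retr a0).
Proof.
apply/continuousP => U [W oW <-].
have -> : retr a0 @^-1` (set_val @^-1` W) =
   (A `&` W) `|` (~` A `&` [set _ | W (set_val a0)]).
  apply/seteqP; split => x /=.
    case: (pselect (A x)) => Ax.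
      by rewrite val_retr //; left.
    by rewrite retr_out //; right.
  case=> [[Ax Wx]|[nAx Wx]].
    by rewrite val_retr.
  by rewrite retr_out.
apply: openU; first exact: openI.
apply: openI; first by rewrite openC.
case: (pselect (W (set_val a0))) => H.
  have -> : [set _ : X | W (set_val a0)] = setT by apply/seteqP; split.
  exact: openT.
have -> : [set _ : X | W (set_val a0)] = set0 by apply/seteqP; split.
exact: open0.
Qed.

Lemma cpt_pre (K : set X) : compact K -> compact (set_val @^-1` K : set A).
Proof.
move=> cK.
case: (pselect (exists a : A, True)) => [[a0 _]|nA].
  have -> : (set_val @^-1` K : set A) = retr a0 @` (K `&` A).
    apply/seteqP; split => [a Ka|_ [x [Kx Ax] <-]].
      by exists (set_val a); [split => //; apply: set_valP | apply: retr_val].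
    by rewrite /= val_retr.
  apply: continuous_compact; last exact: compact_closedI.
  exact/continuous_subspaceT/retr_cont.
have -> : (set_val @^-1` K : set A) = set0.
  by apply/seteqP; split => // a; case: nA; exists a.
exact: compact0.
Qed.

Lemma cpt_img (K : set A) : compact K -> compact (set_val @` K).
Proof.
move=> cK; apply: continuous_compact => //.
exact/continuous_subspaceT/val_cont.
Qed.


Lemma closed_pre (Y Z : topologicalType) (f : Y -> Z) (B : set Z) :
  continuous f -> closed B -> closed (f @^-1` B).
Proof.
move=> cf cB; rewrite -openC.
have -> : ~` (f @^-1` B) = f @^-1` (~` B) by [].
by apply: (continuousP f).1 => //; rewrite openC.
Qed.

Lemma ext_cont (u : A -> A) : continuous u -> continuous (ext_id u).
Proof.
move=> cu; apply/continuousP => W oW.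
have : open (u @^-1` (set_val @^-1` W)).
  by apply: (continuousP u).1 => //; apply: (continuousP set_val).1 => //; exact: val_cont.
case=> W' oW' eW'.
have -> : ext_id u @^-1` W = (W' `&` A) `|` (W `&` ~` A).
  apply/seteqP; split => x /=.
    case: (pselect (A x)) => Ax; last by rewrite ext_out // => ?; right.
    rewrite ext_in => Wx; left; split => //.
    have H : (u @^-1` (set_val @^-1` W)) (exist _ x (mem_set Ax)) by [].
    by rewrite -eW' in H.
  case=> [[W'x Ax]|[Wx nAx]]; last by rewrite ext_out.
  rewrite ext_in.
  have H : (set_val @^-1` W') (exist _ x (mem_set Ax)) by [].
  by rewrite eW' in H.
by apply: openU; apply: openI => //; rewrite openC.
Qed.

Lemma ext_inv (u v : A -> A) : cancel u v -> cancel (ext_id u) (ext_id v).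
Proof.
move=> uv x; case: (pselect (A x)) => Ax; last by rewrite !ext_out.
by rewrite (ext_in u Ax) ext_val uv.
Qed.

Lemma ext_homeo (h : A -> A) : hausdorff_space X -> Homeo_cpt A h -> Homeo_cpt X (ext_id h).
Proof.
move=> hX [[ch [g [cg hg gh]]] sh]; split.
  split; first exact: ext_cont.
  by exists (ext_id g); split; [exact: ext_cont|exact: ext_inv|exact: ext_inv].
have cS := cpt_img sh.
apply: (subclosed_compact _ cS); first exact: closed_closure.
rewrite [X in _ `<=` X](closure_id _).1; last exact: compact_closed.
apply: closureS => x /= mx.
case: (pselect (A x)) => Ax; last by move: mx; rewrite ext_out.
exists (exist _ x (mem_set Ax)) => //.
apply: subset_closure => /= hx; apply: mx.
by rewrite ext_in hx.
Qed.

Lemma restr_homeo (g : X -> X) : Homeo_cpt X g -> (forall x, ~ A x -> g x = x) ->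
  exists h, Homeo_cpt A h /\ ext_id h = g.
Proof.
move=> [[cg [g' [cg' gg' g'g]]] sg] gfix.
have gA x : A x -> A (g x).
  move=> Ax; apply: contrapT => nA.
  have := gfix _ nA => /(f_equal g') ; rewrite !gg' => e.
  by apply: nA; rewrite e.
have g'fix x : ~ A x -> g' x = x.
  by move=> nA; rewrite -{1}(gfix _ nA) gg'.
have g'A x : A x -> A (g' x).
  move=> Ax; apply: contrapT => nA.
  have := g'fix _ nA => /(f_equal g) ; rewrite !g'g => e.
  by apply: nA; rewrite e.
pose h (a : A) := retr a (g (set_val a)).
pose h' (a : A) := retr a (g' (set_val a)).
have vh a : set_val (h a) = g (set_val a) by rewrite val_retr //; apply: gA; apply: set_valP.
have vh' a : set_val (h' a) = g' (set_val a) by rewrite val_retr //; apply: g'A; apply: set_valP.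
have rcont (u : A -> A) (f : X -> X) : continuous f -> (forall a, set_val (u a) = f (set_val a)) -> continuous u.
  move=> cf uf; apply/continuousP => _ [W oW <-].
  exists (f @^-1` W); first exact: (continuousP f).1.
  by apply/seteqP; split => a /=; rewrite uf.
exists h; split; last first.
  apply: funext => x; case: (pselect (A x)) => Ax; last by rewrite ext_out // gfix.
  by rewrite ext_in vh.
split.
  split; first exact: (rcont h g).
  exists h'; split; first exact: (rcont h' g').
    by move=> a; apply: set_val_inj; rewrite vh' vh gg'.
  by move=> a; apply: set_val_inj; rewrite vh vh' g'g.
have cP := cpt_pre sg.
apply: (subclosed_compact _ cP); first exact: closed_closure.
rewrite [X in _ `<=` X](closure_id _).1; last first.
  apply: closed_pre; first exact: val_cont.
  exact: closed_closure.
apply: closureS => a /= ma; apply: subset_closure => /= e; apply: ma.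
by apply: set_val_inj; rewrite vh.
Qed.

End Sub.

Definition Psi (S T : Type) (j : S -> T) (phi : S -> S) (z : T) : T :=
  match pselect (exists w, j w = z) with
  | left P => j (phi (projT1 (cid P)))
  | right _ => z
  end.

Lemma PsiE (S T : Type) (j : S -> T) phi w : injective j -> Psi j phi (j w) = j (phi w).
Proof.
move=> ij; rewrite /Psi; case: pselect => [P|]; last by case; exists w.
by case: cid => w' /= /ij ->.
Qed.

Lemma Psi_out (S T : Type) (j : S -> T) phi z : ~ (exists w, j w = z) -> Psi j phi z = z.
Proof. by rewrite /Psi; case: pselect. Qed.

Lemma bextE (Y bY : topologicalType) (e : Y -> bY) h y : injective e -> bext e h (e y) = e (h y).
Proof.
move=> ie; rewrite /bext; case: pselect => [P|]; last by case; exists y.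
by case: cid => y' /= /ie ->.
Qed.

Lemma bext_out (Y bY : topologicalType) (e : Y -> bY) h z : ~ (exists y, e y = z) -> bext e h z = z.
Proof. by rewrite /bext; case: pselect. Qed.

Lemma Psi_cont (S T : topologicalType) (j : S -> T) : continuous j -> injective j ->
  compact [set: S] -> hausdorff_space T ->
  continuous (Psi j : {compact-open, S -> S} -> {compact-open, T -> T}).
Proof.
move=> cj ij cS hT phi.
have FF : Filter ((Psi j : {compact-open, S -> S} -> {compact-open, T -> T}) @ nbhs phi) by exact: fmap_filter.
apply/(@compact_open_cvgP _ _ _ _ FF) => K W cK oW sub.
pose C := j @^-1` K.
have cC : compact C.
  apply: (subclosed_compact _ cS) => //.
  exact: closed_pre cj (compact_closed hT cK).
apply: (@filterS _ _ _ [set phi' : {compact-open, S -> S} | phi' @` C `<=` j @^-1` W]).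
  move=> phi' H _ [z Kz <-].
  case: (pselect (exists w, j w = z)) => [[w jw]|nz].
    subst z; rewrite PsiE //; apply: (H (phi' w)); by exists w.
  by rewrite Psi_out //; apply: sub; exists z => //; rewrite Psi_out.
apply: open_nbhs_nbhs; split.
  apply: compact_open_open => //.
  exact: (continuousP j).1.
rewrite /=; move=> y [w Cw <-] /=.
have := sub (Psi j phi (j w)); rewrite PsiE //; apply.
by exists (j w) => //; rewrite PsiE.
Qed.

Lemma comp_cont (T1 T2 T3 T4 : topologicalType) (a : T1 -> T2) (b : T3 -> T4) :
  continuous a -> continuous b ->
  continuous ((fun psi => b \o psi \o a) : {compact-open, T2 -> T3} -> {compact-open, T1 -> T4}).
Proof.
move=> ca cb psi.
have FF : Filter (((fun psi => b \o psi \o a) : {compact-open, T2 -> T3} -> {compact-open, T1 -> T4}) @ nbhs psi) by exact: fmap_filter.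
apply/(@compact_open_cvgP _ _ _ _ FF) => K W cK oW sub.
apply: (@filterS _ _ _ [set psi' : {compact-open, T2 -> T3} | psi' @` (a @` K) `<=` b @^-1` W]).
  move=> psi' H _ [z Kz <-]; apply: (H (psi' (a z))).
  by exists (a z) => //; exists z.
apply: open_nbhs_nbhs; split.
  apply: compact_open_open.
    apply: continuous_compact => //; exact: continuous_subspaceT.
  exact: (continuousP b).1.
by move=> _ [_ [z Kz <-] <-]; apply: (sub (b (psi (a z)))); exists z.
Qed.

Section Bridge.
Context (X : topologicalType) (A : set X) (bX : topologicalType) (eX : X -> bX)
  (bA : topologicalType) (eA : A -> bA) (scX : is_stone_cech eX) (scA : is_stone_cech eA)
  (oA : open A) (cA : closed A).

Lemma bridge : exists j : bA -> bX,
  [/\ continuous j, (forall a, j (eA a) = eX (set_val a)), injective j,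
      (forall w x, j w = eX x -> exists a, x = set_val a /\ w = eA a) &
      (forall a0 : A, exists p : bX -> bA,
          [/\ continuous p, (forall w, p (j w) = w) & forall x, p (eX x) = eA (retr a0 x)])].
Proof.
have [j [cj jE]] := sc_ext scA (f := eX \o set_val) (sc_cpt scX) (sc_haus scX)
  (fun a => continuous_comp (@val_cont X A a) (@sc_cont _ _ _ scX (set_val a))).
have P (a0 : A) : exists p : bX -> bA,
    [/\ continuous p, (forall w, p (j w) = w) & forall x, p (eX x) = eA (retr a0 x)].
  have [p [cp pE]] := sc_ext scX (f := eA \o retr a0) (sc_cpt scA) (sc_haus scA)
    (fun x => continuous_comp (@retr_cont X A oA cA a0 x) (@sc_cont _ _ _ scA (retr a0 x))).
  exists p; split => //.
  have pj : p \o j = id.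
    apply: (sc_eq scA (sc_haus scA)).
    - by move=> w; apply: continuous_comp; [exact: cj|exact: cp].
    - by move=> w.
    - by move=> a /=; rewrite jE pE /= retr_val.
  by move=> w; exact: (congr1 (fun F => F w) pj).
exists j; split => //.
- move=> w w' e; have [a0 _] := sc_empty scA w; have [p [_ pj _]] := P a0.
  by rewrite -(pj w) e pj.
- move=> w x e; have [a0 _] := sc_empty scA w; have [p [_ pj pE]] := P a0.
  have wE : w = eA (retr a0 x) by rewrite -(pj w) e pE.
  case: (pselect (A x)) => Ax.
    by exists (retr a0 x); rewrite val_retr.
  exfalso; rewrite retr_out // in wE.
  move: e; rewrite wE jE => /(sc_inj scX) ea; apply: Ax; rewrite -ea; exact: set_valP.
Qed.

End Bridge.

Lemma HC_openU (Y bY : topologicalType) (e : Y -> bY) W1 W2 :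
  HC_open e W1 -> HC_open e W2 -> HC_open e (W1 `|` W2).
Proof.
move=> [V1 [op1 ->]] [V2 [op2 ->]]; exists (V1 `|` V2); split; first exact: openU.
apply/seteqP; split => g /=.
  by case=> [[Hg Vg]|[Hg Vg]]; split => //; [left|right].
by case=> Hg [Vg|Vg]; [left|right].
Qed.

Lemma ext_inj (X : topologicalType) (A : set X) : injective (@ext_id X A).
Proof.
move=> h g e; apply: funext => a; apply: set_val_inj.
by rewrite -!ext_val e.
Qed.

Unset Implicit Arguments.
Set Strict Implicit.

Theorem lemma5p3 (X : topologicalType) (A : set X)
  (bX : topologicalType) (eX : X -> bX)
  (bA : topologicalType) (eA : A -> bA) :
  tychonoff_space X -> clopen A ->
  is_stone_cech eX -> is_stone_cech eA ->
  (* (a) extension by the identity embeds Homeo_cpt(A) as a closed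
     topological subgroup of Homeo_cpt(X) *)
  (([/\ (forall h, Homeo_cpt A h -> Homeo_cpt X (ext_id h)),
       {in Homeo_cpt A &, injective (@ext_id X A)},
       ext_id (@id A) = id &
       (forall h g, Homeo_cpt A h -> Homeo_cpt A g ->
          ext_id (h \o g) = ext_id h \o ext_id g)] /\
   [/\
       (forall W, HC_open eX W ->
          HC_open eA (Homeo_cpt A `&` (@ext_id X A) @^-1` W)),
       (forall U, HC_open eA U ->
          exists W, HC_open eX W /\
            (@ext_id X A) @` U = (@ext_id X A) @` Homeo_cpt A `&` W) &
       HC_open eX (Homeo_cpt X `\` (@ext_id X A) @` Homeo_cpt A)])
  /\
  (* (b) CSHP passes from X to A *)
  (CSHP eX -> CSHP eA)).
Proof.
move=> [_ hX] [oA cA] scX scA.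
have [j [cj jE ij jback Pp]] := bridge scX scA oA cA.
have iX := sc_inj scX; have iA := sc_inj scA.
have I1 h : bext eX (ext_id h) = Psi j (bext eA h).
  apply: funext => z.
  case: (pselect (exists w, j w = z)) => [[w <-]|nz].
    rewrite PsiE //.
    case: (pselect (exists a, eA a = w)) => [[a <-]|nw].
      by rewrite bextE // jE bextE // ext_val jE.
    rewrite (bext_out _ nw) bext_out // => -[x jx].
    have [a [_ wa]] := jback w x (esym jx).
    by apply: nw; exists a; rewrite wa.
  rewrite Psi_out //.
  case: (pselect (exists x, eX x = z)) => [[x xz]|nx]; last by rewrite bext_out.
  subst z; rewrite bextE //; case: (pselect (A x)) => Ax; first last.
    by rewrite ext_out.
  by exfalso; apply: nz; exists (eA (exist _ x (mem_set Ax))); rewrite jE.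
have I2 a0 p : (forall w, p (j w) = w) -> (forall x, p (eX x) = eA (retr a0 x)) ->
    forall h, bext eA h = p \o bext eX (ext_id h) \o j.
  move=> pj pE h; apply: funext => w.
  case: (pselect (exists a, eA a = w)) => [[a <-]|nw].
    by rewrite /= bextE // jE bextE // ext_val pE retr_val.
  rewrite /= bext_out // bext_out ?pj // => -[x jx].
  have [a [_ wa]] := jback _ _ (esym jx).
  by apply: nw; exists a; rewrite wa.
have hom h : Homeo_cpt A h -> Homeo_cpt X (ext_id h).
  by move=> hH; apply: ext_homeo.
have W3 : HC_open eX (Homeo_cpt X `\` (@ext_id X A) @` Homeo_cpt A).
  pose V := [set psi : {compact-open, bX -> bX} | exists x, ~ A x /\ psi (eX x) <> eX x].
  exists V; split.
    rewrite openE => psi [x [nAx ne]].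
    move: (sc_haus scX); rewrite open_hausdorff => /(_ _ _ (introN eqP ne)).
    move=> [[P Q]] /= [Pp' Qx] [oP oQ /eqP PQ].
    apply: (@filterS _ _ _ [set psi' : {compact-open, bX -> bX} | psi' @` [set eX x] `<=` P]).
      move=> psi' H; exists x; split => // e.
      have : (P `&` Q) (eX x).
        split; last by rewrite -inE.
        by rewrite -e; apply: H; exists (eX x).
      by rewrite PQ.
    apply: open_nbhs_nbhs; split.
      by apply: compact_open_open; [exact: compact_set1|].
    by move=> _ [_ -> <-]; rewrite -inE.
  apply/seteqP; split => g.
    move=> [gH nimg]; split => //.
    have : exists x, ~ A x /\ g x <> x.
      apply: contrapT => nex; apply: nimg.
      have [|h [hH <-]] := restr_homeo oA cA gH; last by exists h.
      move=> x nAx; apply: contrapT => ne; apply: nex; by exists x.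
    move=> [x [nAx ne]]; exists x; split => //.
    by rewrite bextE // => /iX.
  move=> [gH [x [nAx ne]]]; split => // -[h hH hg].
  apply: ne; rewrite -hg bextE // ext_out //.
have W2 : forall U, HC_open eA U ->
          exists W, HC_open eX W /\
            (@ext_id X A) @` U = (@ext_id X A) @` Homeo_cpt A `&` W.
  move=> U [V [oV ->]].
  case: (pselect (exists a : A, True)) => [[a0 _]|nA].
    have [p [cp pj pE]] := Pp a0.
    exists (Homeo_cpt X `&` bext eX @^-1` ((fun psi => p \o psi \o j) @^-1` V)); split.
      exists ((fun psi : {compact-open, bX -> bX} => (p \o psi \o j) : {compact-open, bA -> bA}) @^-1` V).
      split => //.
      exact: (continuousP _).1 (comp_cont cj cp) V oV.
    apply/seteqP; split.
      move=> _ [h [hH hV] <-]; split; first by exists h.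
      split; [exact: hom|].
      by move: hV; rewrite /preimage /= (I2 a0 p pj pE h).
    move=> _ [[h hH <-] [_ hV]]; exists h => //; split => //.
    by rewrite /preimage /= (I2 a0 p pj pE h).
  have allEq (f g : A -> A) : f = g.
    by apply: funext => a; case: nA; exists a.
  exists (Homeo_cpt X `&` bext eX @^-1` [set _ | exists h, (Homeo_cpt A `&` bext eA @^-1` V) h]).
  split.
    exists [set _ | exists h, (Homeo_cpt A `&` bext eA @^-1` V) h]; split => //.
    case: (pselect (exists h, (Homeo_cpt A `&` bext eA @^-1` V) h)) => H.
      have -> : [set _ : {compact-open, bX -> bX} | exists h, (Homeo_cpt A `&` bext eA @^-1` V) h] = setT.
        by apply/seteqP; split.
      exact: openT.
    have -> : [set _ : {compact-open, bX -> bX} | exists h, (Homeo_cpt A `&` bext eA @^-1` V) h] = set0.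
      by apply/seteqP; split.
    exact: open0.
  apply/seteqP; split.
    move=> _ [h hU <-]; split; first by exists h => //; case: hU.
    split; first by apply: hom; case: hU.
    by exists h.
  move=> _ [[h hH <-] [_ [h' hU]]]; exists h' => //.
  by rewrite (allEq h h').
have W1 : forall W, HC_open eX W ->
          HC_open eA (Homeo_cpt A `&` (@ext_id X A) @^-1` W).
  move=> W [V [oV ->]]; exists (Psi j @^-1` V); split.
    exact: (continuousP _).1 (Psi_cont cj ij (sc_cpt scA) (sc_haus scX)) V oV.
  apply/seteqP; split => h /=.
    by move=> [hH [_ hV]]; split => //; rewrite -I1.
  by move=> [hH hV]; split => //; split; [exact: hom|rewrite I1].
split.
  split; last by split.
  split => //.
  - by move=> h g _ _; apply: ext_inj.
  - apply: funext => x; case: (pselect (A x)) => Ax; first by rewrite ext_in.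
    by rewrite ext_out.
  - move=> h g _ _; apply: funext => x; case: (pselect (A x)) => Ax.
      by rewrite /= (ext_in (h \o g) Ax) (ext_in g Ax) ext_val.
    by rewrite /= !ext_out.
move=> cX U; split; last first.
  move=> HU; split; first by case: HU => V [_ ->] h [].
  move=> K cK; exists U; split => //; by rewrite setIC.
move=> [UH Ucol].
pose C := Homeo_cpt X `\` (@ext_id X A) @` Homeo_cpt A.
pose U'' := (@ext_id X A) @` U `|` C.
have inHK h K : Homeo_cpt A h -> Homeo_K K (ext_id h) ->
    Homeo_K (set_val @^-1` K : set A) h.
  move=> hH [_ hfix]; split => // a nKa; apply: set_val_inj.
  by rewrite -ext_val hfix.
have colU'' : HC_colim_open eX U''.
  split.
    by move=> g [[h Uh <-]|[]] //; apply: hom; apply: UH.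
  move=> K cK.
  have cKA : compact (set_val @^-1` K : set A) := cpt_pre oA cA cK.
  have [WA [oWA eWA]] := Ucol _ cKA.
  have [W1' [oW1 eW1]] := W2 WA oWA.
  have WAH : WA `<=` Homeo_cpt A by case: oWA => V [_ ->] h [].
  exists (W1' `|` C); split; first exact: HC_openU.
  apply/seteqP; split => g.
    case=> [[[h Uh <-]|Cg] HKg]; split => //; last by right.
    left.
    have : WA h.
      have : (U `&` Homeo_K (set_val @^-1` K : set A)) h.
        by split => //; apply: inHK => //; apply: UH.
      by rewrite eWA => -[].
    move=> WAh.
    have : ((@ext_id X A) @` WA) (ext_id h) by exists h.
    by rewrite eW1 => -[].
  case=> HKg [W1g|Cg]; split => //; last by right.
  case: (pselect ((@ext_id X A @` Homeo_cpt A) g)) => [[h hH hg]|nimg]; last first.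
    by right; split => //; case: HKg.
  left; exists h => //.
  have : ((@ext_id X A) @` Homeo_cpt A `&` W1') g by split => //; exists h.
  rewrite -eW1 => -[h' WAh' h'g].
  have hh' : h' = h by apply: ext_inj; rewrite h'g hg.
  subst h'.
  have : (Homeo_K (set_val @^-1` K : set A) `&` WA) h.
    by split => //; apply: inHK => //; rewrite hg.
  by rewrite -eWA => -[].
have oU'' := (cX U'').1 colU''.
have E : Homeo_cpt A `&` (@ext_id X A) @^-1` U'' = U.
  apply/seteqP; split => h.
    move=> [hH [[h' Uh' e]|[_ nimg]]].
      by rewrite -(ext_inj e).
    by case: nimg; exists h.
  by move=> Uh; split; [exact: UH|left; exists h].
by rewrite -E; apply: W1.
Qed.
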